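(* The polynomials $J$, $\Gamma$ and $B$ are $SL_2(\mathbb{F}_q)$-invariant.
   Context: Let $p>2$ be a prime, $q=p^n$, and $\mathbb{F}$ a field of characteristic $p$ containing $\mathbb{F}_q$. The group $GL_2(\mathbb{F})$ (hence $SL_2(\mathbb{F}_q)$) acts on the right on $\mathbb{F}[a_0,a_1,a_2]$ by algebra automorphisms: for $g=\begin{pmatrix}\alpha&\beta'\\ \gamma'&\delta\end{pmatrix}$, $a_2 g=\alpha^2a_2+2\alpha\beta' a_1+\beta'^2a_0$, $a_1g=\alpha\gamma' a_2+(\alpha\delta+\beta'\gamma')a_1+\beta'\delta a_0$, $a_0g=\gamma'^2a_2+2\gamma'\delta a_1+\delta^2a_0$. Define $\beta=\prod_{c\in\mathbb{F}_q}(a_1+ca_0)$ and for $k\in\mathbb{F}_q$, $\gamma_k=\prod_{c\in\mathbb{F}_q}(a_2+2ca_1+(c^2-k)a_0)$. Let $\mathcal{Q}$ be the set of nonzero quadratic residues in $\mathbb{F}_q$ and $\overline{\mathcal{Q}}$ the set of quadratic nonresidues. Define $\Gamma=\prod_{k\in\overline{\mathcal{Q}}}\gamma_k$, $B=\beta\prod_{k\in\mathcal{Q}}\gamma_k$, $J=a_0\gamma_0$. *)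

(* Defs.v *)
From HB Require Import structures.
From mathcomp Require Import all_boot all_order all_algebra all_field.
From mathcomp Require Import mpoly.
Set Implicit Arguments. Unset Strict Implicit. Unset Printing Implicit Defensive.
Import GRing.Theory.
Local Open Scope ring_scope.

(* F_q is modelled as a finite field K (with #|K| = q) embedded in F via a
   ring morphism f : K -> F (necessarily injective). *)
Section Invariants.
Variables (K : finFieldType) (F : fieldType) (f : {rmorphism K -> F}).

Definition a0 : {mpoly F[3]} := 'X_(@Ordinal 3 0 isT).
Definition a1 : {mpoly F[3]} := 'X_(@Ordinal 3 1 isT).
Definition a2 : {mpoly F[3]} := 'X_(@Ordinal 3 2 isT).

Definition act (g : 'M[K]_2) (P : {mpoly F[3]}) : {mpoly F[3]} :=
  let al := f (g 0 0) in let be := f (g 0 1) in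
  let ga := f (g 1 0) in let de := f (g 1 1) in
  P \mPo [tuple (ga ^+ 2)%:MP * a2 + (2 * ga * de)%:MP * a1 + (de ^+ 2)%:MP * a0;
                (al * ga)%:MP * a2 + (al * de + be * ga)%:MP * a1 + (be * de)%:MP * a0;
                (al ^+ 2)%:MP * a2 + (2 * al * be)%:MP * a1 + (be ^+ 2)%:MP * a0].

Definition betaP : {mpoly F[3]} := \prod_(c : K) (a1 + (f c)%:MP * a0).

Definition gammaP (k : K) : {mpoly F[3]} :=
  \prod_(c : K) (a2 + (2 * f c)%:MP * a1 + (f c ^+ 2 - f k)%:MP * a0).

Definition qres (k : K) : bool := (k != 0) && [exists x : K, x ^+ 2 == k].
Definition qnonres (k : K) : bool := (k != 0) && ~~ [exists x : K, x ^+ 2 == k].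

Definition GammaP : {mpoly F[3]} := \prod_(k : K | qnonres k) gammaP k.
Definition BP : {mpoly F[3]} := betaP * \prod_(k : K | qres k) gammaP k.
Definition JP : {mpoly F[3]} := a0 * gammaP 0.

End Invariants.

(* Main.v *)
Require Import Defs.
From HB Require Import structures.
From mathcomp Require Import all_boot all_order all_algebra all_field.
From mathcomp Require Import mpoly.
From mathcomp Require Import ring.
Set Implicit Arguments. Unset Strict Implicit. Unset Printing Implicit Defensive.
Import GRing.Theory.
Local Open Scope ring_scope.

Section FF.
Variable K : finFieldType.
Hypothesis two_nz : (2 : K) != 0.
Hypothesis q_odd : odd #|K|.

Local Notation q := #|K|.
Definition mm := (q.-1)./2.

Lemma q_gt1 : (1 < q)%N.
Proof. exact: finNzRing_gt1. Qed.

Lemma qm : q.-1 = (mm * 2)%N.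
Proof.
rewrite /mm muln2 halfK.
have := q_gt1; case: #|K| q_odd => // n /= on _.
by rewrite (negbTE on) subn0.
Qed.

Lemma mm_gt0 : (0 < mm)%N.
Proof.
have := q_gt1; have := qm; case: #|K| q_odd => [|[|[|n]]] //= _; case: mm => //.
Qed.

Lemma expq1 (x : K) : x != 0 -> x ^+ q.-1 = 1.
Proof.
move=> xnz; apply: (mulfI xnz); rewrite mulr1 -exprS prednK ?expf_card //.
by apply: ltnW; exact: q_gt1.
Qed.

Lemma wilson : \prod_(x : K | x != 0) x = -1.
Proof.
have h := finField_genPoly K.
rewrite (bigD1 0) //= subr0 in h.
have e : 'X^(q.-1) - 1 = \prod_(x : K | x != 0) ('X - x%:P).
  apply: (mulfI (x := 'X)); first by rewrite polyX_eq0.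
  rewrite -h mulrBr mulr1 -exprS prednK //; apply: ltnW; exact: q_gt1.
move/(congr1 (horner^~ 0)): e; rewrite horner_prod hornerD hornerN hornerXn hornerC.
rewrite expr0n qm muln_eq0 /= (negbTE (lt0n_neq0 mm_gt0)) sub0r.
rewrite (eq_bigr (fun x => (-1) * x)); last by move=> i _; rewrite hornerXsubC sub0r mulN1r.
rewrite big_split /= => e.
have s1 : \prod_(x : K | x != 0) (-1 : K) = 1.
  rewrite (_ : \prod_(x : K | x != 0) (-1 : K) = \prod_(x in [set~ (0:K)]) (-1 : K)).
    by rewrite prodr_const cardsC1 qm -signr_odd oddM andbF.
  by apply: eq_bigl => x; rewrite !inE.
by rewrite s1 mul1r in e; rewrite -e.
Qed.


Definition QQ := [set k : K | qres k].
Definition NN := [set k : K | qnonres k].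

Lemma sq_exp (k : K) : qres k -> k ^+ mm = 1.
Proof.
case/andP=> knz /existsP [x /eqP ex].
have xnz : x != 0 by apply: contraNneq knz => x0; rewrite -ex x0 expr0n.
by rewrite -ex -exprM mulnC -qm expq1.
Qed.

Lemma card_roots_Xn (c : K) : (#|[set x : K | x ^+ mm == c]| <= mm)%N.
Proof.
have := @max_poly_roots _ ('X^mm - c%:P) (enum [set x : K | x ^+ mm == c]).
rewrite size_XnsubC ?mm_gt0 // ltnS cardE; apply.
- by rewrite -size_poly_eq0 size_XnsubC ?mm_gt0.
- apply/allP => x; rewrite mem_enum inE /root hornerD hornerN hornerXn hornerC.
  by move/eqP ->; rewrite subrr.
- exact: enum_uniq.
Qed.

Lemma card_Q_ge : (mm <= #|QQ|)%N.
Proof.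
pose r (s : K) := odflt 0 [pick x | x ^+ 2 == s].
have sub : [set~ (0:K)] \subset (r @: QQ) :|: ((fun s => - r s) @: QQ).
  apply/subsetP => x; rewrite !inE => xnz.
  have sQ : x ^+ 2 \in QQ.
    rewrite inE /qres sqrf_eq0 xnz /=; apply/existsP; by exists x.
  have [y /eqP hy] : exists2 y, y ^+ 2 == x ^+ 2 & r (x ^+ 2) = y.
    rewrite /r; case: pickP => [y hy|none]; first by exists y.
    by have := none x; rewrite eqxx.
  move=> ry.
  have : (x - y) * (x + y) == 0 by rewrite -subr_sqr hy subrr.
  rewrite mulf_eq0 subr_eq0 => /orP [/eqP xy | ].
    by apply/orP; left; apply/imsetP; exists (x ^+ 2) => //; rewrite ry.
  rewrite addr_eq0 => /eqP xy; apply/orP; right; apply/imsetP; exists (x ^+ 2) => //.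
  by rewrite ry.
have := subset_leq_card sub; rewrite cardsC1 qm => h.
have := leq_trans h (leq_card_setU _ _).
move/leq_trans => /(_ (#|QQ| + #|QQ|)%N).
rewrite leq_add ?leq_imset_card // => /(_ isT).
by rewrite addnn -muln2 leq_pmul2r.
Qed.

Lemma QQ_roots : QQ = [set x : K | x ^+ mm == 1].
Proof.
apply/eqP; rewrite eqEcard; apply/andP; split.
  by apply/subsetP => x; rewrite !inE => /sq_exp ->.
exact: leq_trans (card_roots_Xn 1) card_Q_ge.
Qed.

Lemma card_Q : #|QQ| = mm.
Proof.
apply/eqP; rewrite eqn_leq card_Q_ge andbT QQ_roots; exact: card_roots_Xn.
Qed.

Lemma nonres_exp (k : K) : qnonres k -> k ^+ mm = -1.
Proof.
case/andP=> knz nsq.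
have : (k ^+ mm - 1) * (k ^+ mm + 1) == 0.
  by rewrite -subr_sqr expr1n -exprM -qm expq1 // subrr.
rewrite mulf_eq0 subr_eq0 addr_eq0 => /orP [e|/eqP //].
have : k \in QQ by rewrite QQ_roots inE.
by rewrite inE /qres knz (negbTE nsq).
Qed.

Lemma card_N : #|NN| = mm.
Proof.
have e : [set~ (0:K)] = QQ :|: NN.
  apply/setP => x; rewrite !inE /qres /qnonres.
  by case: (x != 0); case: [exists _, _].
have d : QQ :&: NN = set0.
  apply/setP => x; rewrite !inE /qres /qnonres.
  by case: (x != 0); case: [exists _, _].
have := cardsUI QQ NN; rewrite -e d cards0 addn0 cardsC1 qm card_Q.
by rewrite muln2 -addnn => /eqP; rewrite eqn_add2l => /eqP.
Qed.

Lemma prodN (y : K) : \prod_(k in NN) (y - k) = y ^+ mm + 1.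
Proof.
have pe : \prod_(k in NN) ('X - k%:P) = 'X^mm + 1%:P :> {poly K}.
  have dv : (\prod_(k in NN) ('X - k%:P) : {poly K}) %| 'X^mm + 1%:P.
    rewrite -big_enum /=; apply: uniq_roots_dvdp.
      apply/allP => x; rewrite mem_enum inE => /nonres_exp e.
      by rewrite /root hornerD hornerXn hornerC e addNr.
    by rewrite uniq_rootsE enum_uniq.
  apply/eqP; rewrite -eqp_monic; last first.
    - by rewrite monicXnaddC ?mm_gt0.
    - by rewrite monic_prod_XsubC.
  rewrite -dvdp_size_eqp // size_XnaddC ?mm_gt0 // -big_enum /= size_prod_XsubC.
  by rewrite -cardE card_N.
move/(congr1 (horner^~ y)): pe; rewrite horner_prod hornerD hornerXn hornerC => <-.
by apply: eq_bigr => k _; rewrite hornerXsubC.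
Qed.


Lemma wilson_shift (t : K) : \prod_(y : K | y != t) (y - t) = -1.
Proof.
rewrite (reindex_inj (addIr t)) /=.
rewrite -wilson; apply: eq_big => [z|z _]; last by rewrite addrK.
by rewrite -subr_eq0 addrK.
Qed.

Lemma tt_nz (t : K) : t != 0 -> t + t != 0.
Proof. by move=> tnz; rewrite -mulr2n -mulr_natl mulf_neq0. Qed.

Lemma prod_sq_minus (t : K) : t != 0 ->
  \prod_(y : K | (y != t) && (y != -t)) (y ^+ 2 - t ^+ 2) = - (4 * t ^+ 2)^-1.
Proof.
move=> tnz; have t2 := tt_nz tnz.
have ht : -t != t.
  by apply: contraNneq t2 => e; rewrite -{1}e addNr.
have e1 := wilson_shift t; rewrite (bigD1 (-t)) //= in e1.
have e2 := wilson_shift (-t); rewrite (bigD1 t) //= ?opprK ?ht // in e2; last first.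
  by rewrite eq_sym.
rewrite (eq_bigr (fun y => (y - t) * (y + t))); last by move=> y _; rewrite subr_sqr mulrC.
rewrite big_split /=.
set X := \prod_(y | _) (y - t) in e1 *.
have -> : \prod_(y | (y != t) && (y != - t)) (y + t) = \prod_(y | (y != - t) && (y != t)) (y + t).
  by apply: eq_bigl => y; rewrite andbC.
set Y := \prod_(y | _) (y + t) in e2 *.
have -> : X = (-t - t)^-1 * (-1).
  by rewrite -e1; field; rewrite -opprD oppr_eq0.
have -> : Y = (t + t)^-1 * (-1).
  by rewrite -e2; field.
field.
rewrite tnz t2 -opprD oppr_eq0 t2 andbT /=.
by rewrite (_ : 4 = 2 * 2) ?mulf_neq0 //; ring.
Qed.


Definition tri := (K * K * K)%type.
Definition Tr (a b c d : K) (S : tri) : tri :=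
  let: (u, v, w) := S in
  (u * a ^+ 2 + 2 * v * a * c + w * c ^+ 2,
   u * a * b + v * (a * d + b * c) + w * c * d,
   u * b ^+ 2 + 2 * v * b * d + w * d ^+ 2).
Definition sc (s : K) (S : tri) : tri := (s * S.1.1, s * S.1.2, s * S.2).
Lemma sc_sc x y S : sc x (sc y S) = sc (x * y) S.
Proof. by case: S => [[u v] w]; rewrite /sc /= !mulrA. Qed.

Lemma sc1 S : sc 1 S = S.
Proof. by case: S => [[u v] w]; rewrite /sc /= !mul1r. Qed.

Lemma Tr_sc a b c d s S : Tr a b c d (sc s S) = sc s (Tr a b c d S).
Proof. case: S => [[u v] w]; rewrite /sc /=; congr (_, _, _); ring. Qed.

Lemma Tr_inv a b c d S :
  Tr d (-b) (-c) a (Tr a b c d S) = sc ((a * d - b * c) ^+ 2) S.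
Proof. case: S => [[u v] w]; rewrite /sc /=; congr (_, _, _); ring. Qed.

Lemma Tr_det a b c d S :
  (Tr a b c d S).1.2 ^+ 2 - (Tr a b c d S).1.1 * (Tr a b c d S).2 =
  (S.1.2 ^+ 2 - S.1.1 * S.2) * (a * d - b * c) ^+ 2.
Proof. case: S => [[u v] w]; rewrite /=; ring. Qed.

Lemma Tr_injsc a b c d l S1 S2 : a * d - b * c = 1 ->
  Tr a b c d S1 = sc l (Tr a b c d S2) -> S1 = sc l S2.
Proof.
move=> det e; have := congr1 (Tr d (-b) (-c) a) e.
by rewrite -Tr_sc !Tr_inv det expr1n !sc1.
Qed.

Lemma reindex_set (R : comNzRingType) (I : finType) (A : {set I}) (h : I -> I)
  (G : I -> R) : {in A &, injective h} -> (forall i, i \in A -> h i \in A) ->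
  \prod_(i in A) G (h i) = \prod_(i in A) G i.
Proof.
move=> inj hA; rewrite -big_imset //; apply: eq_bigl => j.
have -> : h @: A = A; last by [].
apply/eqP; rewrite eqEcard card_in_imset // leqnn andbT.
by apply/subsetP => j' /imsetP [i iA ->]; exact: hA.
Qed.

Lemma inj_h (I : finType) (A : {set I}) (Sf : I -> tri) (h : I -> I) (s : I -> K)
  a b c d : a * d - b * c = 1 ->
  (forall i, i \in A -> s i != 0) ->
  (forall i, i \in A -> Tr a b c d (Sf i) = sc (s i) (Sf (h i))) ->
  (forall i j l, i \in A -> j \in A -> Sf i = sc l (Sf j) -> i = j) ->
  {in A &, injective h}.
Proof.
move=> det snz hT nrm i j iA jA hij; apply: (nrm i j (s i / s j)) => //.
apply: (Tr_injsc (a:=a) (b:=b) (c:=c) (d:=d)) => //.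
rewrite hT // hT // hij sc_sc mulfVK //; exact: snz.
Qed.


Lemma prod_constT (R : comNzRingType) (x : R) : \prod_(y : K) x = x ^+ #|K|.
Proof.
rewrite (eq_bigl (fun y => y \in [set: K])) ?prodr_const ?cardsT // => y.
by rewrite inE.
Qed.

Lemma prod_const_nz (R : comNzRingType) (x : R) : \prod_(y : K | y != 0) x = x ^+ #|K|.-1.
Proof.
rewrite (eq_bigl (fun y => y \in [set~ (0:K)])) ?prodr_const ?cardsC1 // => y.
by rewrite !inE.
Qed.

Lemma prod_affine (R : comNzRingType) (G : K -> R) (a c : K) : c != 0 ->
  \prod_(x : K) G (a + x * c) = \prod_(y : K) G y.
Proof.
move=> cnz; rewrite [RHS](reindex_inj (h := fun x => a + x * c)) //.
by move=> x y /addrI /(mulIf cnz).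
Qed.

Lemma expq1' (x : K) : x != 0 -> x ^+ (mm * 2) = 1.
Proof. by rewrite -qm; exact: expq1. Qed.

Lemma const_sq_prod (x : K) (A : {set K}) : x != 0 -> #|A| = mm ->
  \prod_(k in A) \prod_(y : K) x ^+ 2 = 1.
Proof.
move=> xnz cA; rewrite (eq_bigr (fun _ => x ^+ 2)); last first.
  by move=> k _; rewrite prod_constT exprAC expf_card.
by rewrite prodr_const cA -exprM mulnC expq1'.
Qed.

Section Cases.
Variables a b c d : K.
Hypothesis det : a * d - b * c = 1.

Lemma a_nz_of_c0 : c = 0 -> a != 0.
Proof.
move=> c0; apply/eqP => a0; move: det; rewrite a0 c0 !mul0r mulr0 subrr => /eqP.
by rewrite eq_sym oner_eq0.
Qed.

Definition SG (p : K * K) : tri := (1, p.2, p.2 ^+ 2 - p.1).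
Definition AG := [set p : K * K | qnonres p.1].
Definition sG (p : K * K) := (Tr a b c d (SG p)).1.1.
Definition hG (p : K * K) : K * K :=
  let T := Tr a b c d (SG p) in ((T.1.2 ^+ 2 - T.1.1 * T.2) / T.1.1 ^+ 2, T.1.2 / T.1.1).

Lemma sG_E p : sG p = (a + p.2 * c) ^+ 2 - p.1 * c ^+ 2.
Proof. by case: p => k x; rewrite /sG /=; ring. Qed.

Lemma nonres_div (k z : K) : z != 0 -> qnonres k -> qnonres (k / z ^+ 2).
Proof.
move=> znz /andP [knz nsq]; apply/andP; split.
  by rewrite mulf_neq0 // invr_eq0 expf_neq0.
apply: contra nsq => /existsP [y /eqP ey]; apply/existsP; exists (y * z).
by rewrite exprMn ey mulfVK // expf_neq0.
Qed.

Lemma res_div (k z : K) : z != 0 -> qres k -> qres (k / z ^+ 2).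
Proof.
move=> znz /andP [knz /existsP [y /eqP ey]]; apply/andP; split.
  by rewrite mulf_neq0 // invr_eq0 expf_neq0.
by apply/existsP; exists (y / z); rewrite expr_div_n ey.
Qed.

Lemma sG_nz p : p \in AG -> sG p != 0.
Proof.
case: p => k x; rewrite inE sG_E /= => /andP [knz nsq].
have [c0|cnz] := eqVneq c 0.
  rewrite c0 (_ : (a + x * 0) ^+ 2 - k * 0 ^+ 2 = a ^+ 2); last by ring.
  by rewrite expf_neq0 // a_nz_of_c0.
apply: contra nsq; rewrite subr_eq0 => /eqP e.
apply/existsP; exists ((a + x * c) / c); apply/eqP.
by rewrite expr_div_n e mulfK // expf_neq0.
Qed.

Lemma caseG :
  [/\ {in AG &, injective hG}, (forall p, p \in AG -> hG p \in AG),
      (forall p, p \in AG -> Tr a b c d (SG p) = sc (sG p) (SG (hG p)))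
    & \prod_(p in AG) sG p = 1].
Proof.
have DT p : (Tr a b c d (SG p)).1.2 ^+ 2 - (Tr a b c d (SG p)).1.1 * (Tr a b c d (SG p)).2 = p.1.
  by rewrite Tr_det det expr1n mulr1 /SG /=; ring.
have hT : forall p, p \in AG -> Tr a b c d (SG p) = sc (sG p) (SG (hG p)).
  move=> p pA; have := DT p; have := sG_nz pA; rewrite /hG /sc /sG.
  case: (Tr a b c d (SG p)) => [[u v] w] /= unz _; rewrite /SG /=.
  congr (_, _, _); first by rewrite mulr1.
    by rewrite mulrC divfK.
  field; done.
split => //.
- apply: (inj_h (Sf := SG) det sG_nz hT).
  move=> [k1 x1] [k2 x2] l _ _; rewrite /SG /sc /= => [[e1 e2 e3]].
  move: e1; rewrite mulr1 => e1; rewrite -e1 !mul1r in e2 e3.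
  by rewrite e2 in e3 *; move/addrI: e3 => /oppr_inj ->.
- move=> p pA; rewrite inE /hG /= DT.
  have := nonres_div (sG_nz pA) (_ : qnonres p.1); rewrite /sG; apply.
  by move: pA; rewrite inE.
- have -> : \prod_(p in AG) sG p = \prod_(k in NN) \prod_(x : K) ((a + x * c) ^+ 2 - k * c ^+ 2).
    rewrite pair_big_dep; apply: eq_big => [[k x]|[k x] _]; first by rewrite !inE andbT.
    by rewrite sG_E.
  have [c0|cnz] := eqVneq c 0.
    rewrite (eq_bigr (fun _ => \prod_(y : K) a ^+ 2)); last first.
      by move=> k _; apply: eq_bigr => x _; rewrite c0; ring.
    by apply: const_sq_prod; [exact: a_nz_of_c0 | exact: card_N].
  under eq_bigr do rewrite (prod_affine (fun y => y ^+ 2 - _ * c ^+ 2) a cnz).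
  have c2 : c ^+ 2 != 0 by rewrite expf_neq0.
  rewrite (reindex_set (A := NN) (h := fun k => k * c ^+ 2)
      (fun k => \prod_(y : K) (y ^+ 2 - k))); last 2 first.
    - by move=> x y _ _ /(mulIf c2).
    - move=> k; rewrite !inE => kN; rewrite -[c ^+ 2]invrK -exprVn.
      by apply: nonres_div; rewrite ?invr_eq0.
  rewrite exchange_big /=.
  under eq_bigr do rewrite prodN -exprM mulnC -qm.
  rewrite (bigD1 0) //= expr0n /= (negbTE (lt0n_neq0 _)); last first.
    by rewrite -ltnS prednK ?q_gt1 //; apply: ltnW; exact: q_gt1.
  rewrite add0r mul1r (eq_bigr (fun _ => 2)); last by move=> y ynz; rewrite expq1.
  by rewrite prod_const_nz expq1.
Qed.


Lemma Tr_nz S : S != (0, 0, 0) -> Tr a b c d S != (0, 0, 0).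
Proof.
apply: contra => /eqP e; apply/eqP.
have := @Tr_injsc a b c d 0 S S det; rewrite e /sc /= !mul0r; exact.
Qed.

Lemma mul_c_eq x y : c != 0 -> c * x = y -> x = y / c.
Proof. by move=> cnz <-; rewrite [c * x]mulrC mulfK. Qed.

Definition SJ (i : K + unit) : tri :=
  match i with inl x => (1, x, x ^+ 2 - 0) | inr _ => (0, 0, 1) end.
Definition hJ (i : K + unit) : K + unit :=
  if (Tr a b c d (SJ i)).1.1 != 0
  then inl ((Tr a b c d (SJ i)).1.2 / (Tr a b c d (SJ i)).1.1) else inr tt.
Definition sJ (i : K + unit) : K :=
  if (Tr a b c d (SJ i)).1.1 != 0 then (Tr a b c d (SJ i)).1.1
  else (Tr a b c d (SJ i)).2.

Lemma SJ_nz i : SJ i != (0, 0, 0).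
Proof.
case: i => [x|[]]; apply/eqP; rewrite /SJ => -[].
  by move=> /eqP; rewrite oner_eq0.
by move=> /eqP; rewrite oner_eq0.
Qed.

Lemma caseJ :
  [/\ {in [set: K + unit] &, injective hJ},
      (forall i, i \in [set: K + unit] -> hJ i \in [set: K + unit]),
      (forall i, i \in [set: K + unit] -> Tr a b c d (SJ i) = sc (sJ i) (SJ (hJ i)))
    & \prod_(i in [set: K + unit]) sJ i = 1].
Proof.
have DT i : (Tr a b c d (SJ i)).1.2 ^+ 2 - (Tr a b c d (SJ i)).1.1 * (Tr a b c d (SJ i)).2 = 0.
  by rewrite Tr_det; case: i => [x|[]] /=; ring.
have key i : sJ i != 0 /\ Tr a b c d (SJ i) = sc (sJ i) (SJ (hJ i)).
  have := DT i; have := Tr_nz (SJ_nz i); rewrite /hJ /sJ.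
  case: (Tr a b c d (SJ i)) => [[u v] w] /= nz D.
  have [u0|unz] := eqVneq u 0.
    move: D; rewrite u0 mul0r subr0 => /eqP; rewrite sqrf_eq0 => /eqP v0.
    rewrite /=; move: nz; rewrite u0 v0 !xpair_eqE eqxx /= => wnz.
    by split => //; rewrite /sc /=; congr (_, _, _); ring.
  rewrite /=; split => //; rewrite /sc /=; congr (_, _, _).
  - by rewrite mulr1.
  - by rewrite mulrC divfK.
  - by rewrite subr0 expr_div_n; move/eqP: D; rewrite subr_eq0 => /eqP ->; field.
split => //.
- apply: (inj_h (Sf := SJ) det (fun i _ => (key i).1) (fun i _ => (key i).2)).
  move=> [x1|[]] [x2|[]] l _ _; rewrite /SJ /sc /= => [[e1 e2 e3]] //.
  + by move: e1 e2; rewrite mulr1 => <-; rewrite mul1r => ->.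
  + by move: e1; rewrite mulr0 => /eqP; rewrite oner_eq0.
  + have l0 : l = 0 by rewrite -[l]mulr1 -e1.
    by move: e3; rewrite l0 mul0r => /eqP; rewrite oner_eq0.
- by move=> i _; rewrite inE.
- by move=> i _; exact: (key i).2.
- rewrite big_sumType /= (big_pred1 tt); last by move=> []; rewrite inE.
  have sJl x : sJ (inl x) = if (a + x * c) ^+ 2 != 0 then (a + x * c) ^+ 2 else (b + x * d) ^+ 2.
    rewrite /sJ (_ : (Tr a b c d (SJ (inl x))).1.1 = (a + x * c) ^+ 2); last by rewrite /=; ring.
    by rewrite (_ : (Tr a b c d (SJ (inl x))).2 = (b + x * d) ^+ 2) //= ; ring.
  have sJr u : sJ (inr u) = if c ^+ 2 != 0 then c ^+ 2 else d ^+ 2.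
    case: u; rewrite /sJ (_ : (Tr a b c d (SJ (inr tt))).1.1 = c ^+ 2); last by rewrite /=; ring.
    by rewrite (_ : (Tr a b c d (SJ (inr tt))).2 = d ^+ 2) //= ; ring.
  rewrite (eq_bigl (fun _ => true)); last by move=> x; rewrite inE.
  rewrite (sJr tt).
  under eq_bigr do rewrite sJl.
  have [c0|cnz] := eqVneq c 0.
    have a0 := a_nz_of_c0 c0.
    rewrite c0 expr0n eqxx /=.
    rewrite (eq_bigr (fun _ => a ^+ 2)); last first.
      by move=> x _; rewrite mulr0 addr0 expf_neq0.
    rewrite prod_constT exprAC expf_card -exprMn.
    by move: det; rewrite c0 mulr0 subr0 => ->; rewrite expr1n.
  rewrite expf_neq0 //.
  rewrite (eq_bigr (fun x => (fun y => if y != 0 then y ^+ 2 else (c^-1) ^+ 2) (a + x * c))); last first.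
    move=> x _ /=; rewrite sqrf_eq0; case: eqP => [y0|//] /=.
    have : c * (b + x * d) = -1.
      rewrite (_ : c * (b + x * d) = - (a * d - b * c) + d * (a + x * c)); last by ring.
      by rewrite y0 det mulr0 addr0.
    by move/(mul_c_eq cnz) ->; rewrite mulN1r sqrrN.
  rewrite (prod_affine (fun y => if y != 0 then y ^+ 2 else (c^-1) ^+ 2)) //.
  rewrite (bigD1 0) //= eqxx /=.
  rewrite (eq_bigr (fun y => y ^+ 2)); last by move=> y ->.
  rewrite prodrXl wilson sqrrN expr1n mulr1 -exprMn mulVf //; exact: expr1n.
Qed.


Definition SB (i : (K * K) + K) : tri :=
  match i with inl p => (1, p.2, p.2 ^+ 2 - p.1) | inr x => (0, 2^-1, x) end.
Definition AB := [set i : (K * K) + K | if i is inl p then qres p.1 else true].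
Definition hB (i : (K * K) + K) : (K * K) + K :=
  let T := Tr a b c d (SB i) in
  if T.1.1 != 0 then inl ((T.1.2 ^+ 2 - T.1.1 * T.2) / T.1.1 ^+ 2, T.1.2 / T.1.1)
  else inr (T.2 / (2 * T.1.2)).
Definition sB (i : (K * K) + K) : K :=
  let T := Tr a b c d (SB i) in if T.1.1 != 0 then T.1.1 else 2 * T.1.2.

Lemma DB_res i : i \in AB -> qres ((SB i).1.2 ^+ 2 - (SB i).1.1 * (SB i).2).
Proof.
case: i => [[k x]|x]; rewrite inE /=.
  by rewrite (_ : x ^+ 2 - 1 * (x ^+ 2 - k) = k) //; ring.
move=> _; rewrite mul0r subr0; apply/andP; split.
  by rewrite expf_neq0 // invr_eq0.
by apply/existsP; exists 2^-1.
Qed.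

Lemma qres_nz (k : K) : qres k -> k != 0.
Proof. by case/andP. Qed.

Lemma caseB :
  [/\ {in AB &, injective hB}, (forall i, i \in AB -> hB i \in AB),
      (forall i, i \in AB -> Tr a b c d (SB i) = sc (sB i) (SB (hB i)))
    & \prod_(i in AB) sB i = 1].
Proof.
have DT i : (Tr a b c d (SB i)).1.2 ^+ 2 - (Tr a b c d (SB i)).1.1 * (Tr a b c d (SB i)).2
    = (SB i).1.2 ^+ 2 - (SB i).1.1 * (SB i).2.
  by rewrite Tr_det det expr1n mulr1.
have key i : i \in AB ->
    [/\ sB i != 0, hB i \in AB & Tr a b c d (SB i) = sc (sB i) (SB (hB i))].
  move=> iA; have := DB_res iA; rewrite -DT /hB /sB.
  case: (Tr a b c d (SB i)) => [[u v] w] /= D.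
  have [u0|unz] := eqVneq u 0.
    move: D; rewrite u0 mul0r subr0 /= => D.
    have vnz : v != 0 by move: (qres_nz D); rewrite expf_eq0.
    split; first by rewrite mulf_neq0.
      by rewrite inE.
    by rewrite /sc /=; congr (_, _, _); field; rewrite ?two_nz ?vnz.
  rewrite /=; split => //.
    by rewrite inE /=; apply: res_div.
  rewrite /sc /=; congr (_, _, _).
  - by rewrite mulr1.
  - by rewrite mulrC divfK.
  - by field.
split.
- have kk1 i : i \in AB -> sB i != 0 by move=> /key [].
  have kk3 i : i \in AB -> Tr a b c d (SB i) = sc (sB i) (SB (hB i)) by move=> /key [].
  apply: (inj_h (Sf := SB) det kk1 kk3).
  move=> [[k1 x1]|x1] [[k2 x2]|x2] l _ _; rewrite /SB /sc /= => [[e1 e2 e3]].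
  + move: e1 e2 e3; rewrite mulr1 => <-; rewrite !mul1r => ->.
    by move/addrI/oppr_inj ->.
  + by move: e1; rewrite mulr0 => /eqP; rewrite oner_eq0.
  + have l0 : l = 0 by rewrite -[l]mulr1 -e1.
    by move: e2; rewrite l0 mul0r => /eqP; rewrite invr_eq0 (negbTE two_nz).
  + have l1 : l = 1.
      by apply: (mulIf (_ : 2^-1 != 0)); rewrite ?invr_eq0 // mul1r -e2.
    by move: e3; rewrite l1 mul1r => ->.
- by move=> i iA; case: (key i iA).
- by move=> i iA; case: (key i iA).
rewrite big_sumType /=.
have sBr x : sB (inr x) =
    if c * (a + x * c) != 0 then c * (a + x * c) else a * d + b * c + 2 * x * c * d.
  rewrite /sB (_ : (Tr a b c d (SB (inr x))).1.1 = c * (a + x * c)); last first.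
    by rewrite /=; field.
  by rewrite (_ : 2 * (Tr a b c d (SB (inr x))).1.2 = a * d + b * c + 2 * x * c * d) //=; field.
have sBl k x : sB (inl (k, x)) =
    if (a + x * c) ^+ 2 - k * c ^+ 2 != 0 then (a + x * c) ^+ 2 - k * c ^+ 2
    else 2 * (a * b + x * (a * d + b * c) + (x ^+ 2 - k) * c * d).
  rewrite /sB (_ : (Tr a b c d (SB (inl (k, x)))).1.1 = (a + x * c) ^+ 2 - k * c ^+ 2).
    by rewrite /=; congr (if _ then _ else 2 * _); ring.
  by rewrite /=; ring.
rewrite [X in _ * X](eq_bigl (fun x => true)); last by move=> x; rewrite inE.
under [X in _ * X]eq_bigr do rewrite sBr.
have -> : \prod_(p | inl p \in AB) sB (inl p) =
    \prod_(k in QQ) \prod_(x : K) sB (inl (k, x)).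
  rewrite pair_big_dep; apply: eq_bigl => [[k x]]; by rewrite !inE andbT.
under eq_bigr do under eq_bigr do rewrite sBl.
have [c0|cnz] := eqVneq c 0.
  have a0 := a_nz_of_c0 c0.
  have ad1 : a * d = 1 by move: det; rewrite c0 mulr0 subr0.
  rewrite [X in _ * X](eq_bigr (fun _ => 1)); last first.
    move=> x _; rewrite c0 mul0r eqxx /=; rewrite ad1; ring.
  rewrite prod_constT expr1n mulr1.
  rewrite (eq_bigr (fun _ => \prod_(y : K) a ^+ 2)); last first.
    move=> k _; apply: eq_bigr => x _.
    rewrite (_ : (a + x * c) ^+ 2 - k * c ^+ 2 = a ^+ 2); last by rewrite c0; ring.
    by rewrite expf_neq0.
  by apply: const_sq_prod => //; exact: card_Q.
rewrite [X in _ * X](eq_bigr (fun x => (fun y => if y != 0 then c * y else -1) (a + x * c)))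
  ; last first.
  move=> x _ /=; rewrite mulf_eq0 (negbTE cnz) /=; case: eqP => [y0|//] /=.
  rewrite (_ : a * d + b * c + 2 * x * c * d = - (a * d - b * c) + 2 * d * (a + x * c)); last by ring.
  by rewrite y0 det mulr0 addr0.
rewrite (prod_affine (fun y => if y != 0 then c * y else -1)) //.
rewrite [X in _ * X](bigD1 0) //= eqxx /=.
rewrite [X in _ * (_ * X)](eq_bigr (fun y => c * y)); last by move=> y ->.
rewrite big_split /= prod_const_nz expq1 // wilson mul1r mulrNN mulr1 mulr1.
rewrite (eq_bigr (fun _ => (c^-1) ^+ 2)).
  by rewrite prodr_const card_Q -exprM mulnC expq1' // invr_eq0.
move=> k; rewrite inE => /andP [knz /existsP [z /eqP kz]].
have znz : z != 0 by apply: contraNneq knz => z0; rewrite -kz z0 expr0n.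
set t := z * c.
have tnz : t != 0 by rewrite mulf_neq0.
pose H y := if y ^+ 2 - t ^+ 2 != 0 then y ^+ 2 - t ^+ 2 else - (2 * y) / c.
rewrite (eq_bigr (fun x => H (a + x * c))); last first.
  move=> x _; rewrite /H (_ : k * c ^+ 2 = t ^+ 2); last by rewrite /t -kz; ring.
  case: eqP => [u0|//] /=.
  set y := a + x * c.
  have cv : c * (a * b + x * (a * d + b * c) + (x ^+ 2 - k) * c * d) =
      d * (y ^+ 2 - k * c ^+ 2) - y * (a * d - b * c).
    by rewrite /y; ring.
  rewrite det mulr1 (_ : k * c ^+ 2 = t ^+ 2) ?u0 ?mulr0 ?sub0r in cv; last first.
    by rewrite /t -kz; ring.
  by rewrite (mul_c_eq cnz cv); field.
rewrite (prod_affine H) //.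
have ht : -t != t.
  by apply: contraNneq (tt_nz tnz) => e; rewrite -{1}e addNr.
rewrite (bigD1 t) //= (bigD1 (-t)) //=.
rewrite (eq_bigr (fun y => y ^+ 2 - t ^+ 2)); last first.
  move=> y /andP [yt ymt]; rewrite /H subr_sqr mulf_eq0 !subr_eq0 addr_eq0.
  by rewrite (negbTE yt) (negbTE ymt).
rewrite prod_sq_minus // /H subrr eqxx sqrrN subrr eqxx /=.
field; rewrite cnz tnz /=.
by rewrite (_ : 4 = 2 * 2) ?mulf_neq0 //; ring.
Qed.

End Cases.

End FF.

Section S.
Variables (K : finFieldType) (F : fieldType) (f : {rmorphism K -> F}).
Definition Lf (S : tri K) : {mpoly F[3]} :=
  (f S.1.1)%:MP * a2 F + (2 * f S.1.2)%:MP * a1 F + (f S.2)%:MP * a0 F.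
Lemma compM (t : 3.-tuple {mpoly F[3]}) (p q : {mpoly F[3]}) :
  (p * q) \mPo t = (p \mPo t) * (q \mPo t).
Proof. by rewrite rmorphM. Qed.

Lemma act_Lf (g : 'M[K]_2) S :
  act f g (Lf S) = Lf (Tr (g 0 0) (g 0 1) (g 1 0) (g 1 1) S).
Proof.
case: S => [[u v] w].
rewrite /act /Lf /a0 /a1 /a2 /= !comp_mpolyD !compM !comp_mpolyC !comp_mpolyXU /=.
do ![rewrite rmorphD | rewrite rmorphM | rewrite rmorphXn | rewrite rmorph_nat].
ring.
Qed.

Lemma Lf_sc s S : Lf (sc s S) = (f s)%:MP * Lf S.
Proof.
case: S => [[u v] w]; rewrite /Lf /sc /=.
set A0 := a0 F. set A1 := a1 F. set A2 := a2 F.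
do ![rewrite rmorphD | rewrite rmorphM | rewrite rmorphXn | rewrite rmorph_nat].
ring.
Qed.

Lemma act_prod0 (g : 'M[K]_2) (I : finType) (A : {set I}) (P : I -> {mpoly F[3]}) :
  act f g (\prod_(i in A) P i) = \prod_(i in A) act f g (P i).
Proof.
apply: (big_morph (act f g)); last by rewrite /act comp_mpoly1.
by move=> x y; rewrite /act compM.
Qed.

Lemma act_prod (g : 'M[K]_2) (I : finType) (A : {set I}) (Sf : I -> tri K)
  (h : I -> I) (s : I -> K) :
  {in A &, injective h} -> (forall i, i \in A -> h i \in A) ->
  (forall i, i \in A -> Tr (g 0 0) (g 0 1) (g 1 0) (g 1 1) (Sf i) = sc (s i) (Sf (h i))) ->
  \prod_(i in A) s i = 1 ->
  act f g (\prod_(i in A) Lf (Sf i)) = \prod_(i in A) Lf (Sf i).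
Proof.
move=> inj hA hT sp; rewrite act_prod0.
rewrite (eq_bigr (fun i => (f (s i))%:MP * Lf (Sf (h i)))); last first.
  by move=> i iA; rewrite act_Lf hT // Lf_sc.
rewrite big_split /= -!rmorph_prod /= sp rmorph1 rmorph1 mul1r.
exact: (@reindex_set _ _ A h (fun i => Lf (Sf i))).
Qed.

End S.


Lemma det22 (R : comNzRingType) (g : 'M[R]_2) :
  \det g = g 0 0 * g 1 1 - g 0 1 * g 1 0.
Proof.
rewrite (expand_det_row _ 0) !big_ord_recl big_ord0 addr0 /cofactor !det_mx11 !mxE /=.
rewrite add0n expr0 mul1r /= expr1 mulN1r mulrN.
by congr (g _ _ * g _ _ - g _ _ * g _ _); apply: val_inj.
Qed.

Lemma Lf_gamma (K : finFieldType) (F : fieldType) (f : {rmorphism K -> F}) (k x : K) :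
  Lf f (1, x, x ^+ 2 - k) =
  a2 F + (2 * f x)%:MP * a1 F + (f x ^+ 2 - f k)%:MP * a0 F.
Proof. by rewrite /Lf /= !rmorph1 mul1r rmorphB rmorphXn. Qed.

Theorem lemma3p1 (p n : nat) (K : finFieldType) (F : fieldType)
  (f : {rmorphism K -> F}) :
  prime p -> (2 < p)%N -> p \in [pchar K] -> #|K| = (p ^ n)%N ->
  forall g : 'M[K]_2, \det g = 1 ->
    [/\ act f g (JP f) = JP f, act f g (GammaP f) = GammaP f
      & act f g (BP f) = BP f].
Proof.
move=> pr p2 chp cardK g detg.
have two_nz : (2 : K) != 0.
  apply/negP => /eqP h; have := dvdn_pcharf chp 2; rewrite h eqxx => /dvdn_leq.
  by move=> /(_ isT); rewrite leqNgt p2.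
have q_odd : odd #|K|.
  rewrite cardK oddX; case: (even_prime pr) => [pe|->]; last by rewrite orbT.
  by rewrite pe in p2.
have det : g 0 0 * g 1 1 - g 0 1 * g 1 0 = 1 by rewrite -det22.
split.
- have [inj hA hT sp] := caseJ q_odd det.
  have -> : JP f = \prod_(i in [set: K + unit]) Lf f (SJ i).
    rewrite big_sumType /= (big_pred1 tt); last by move=> []; rewrite inE.
    rewrite /JP /gammaP mulrC; congr (_ * _).
      apply: eq_big => [x|x _]; first by rewrite inE.
      by rewrite Lf_gamma.
    by rewrite /Lf /= !rmorph0 !rmorph1 mulr0 !rmorph0 !mul0r !add0r mul1r.
  exact: act_prod inj hA hT sp.
- have [inj hA hT sp] := caseG two_nz q_odd det.
  have -> : GammaP f = \prod_(i in AG K) Lf f (SG i).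
    rewrite /GammaP /gammaP pair_big_dep; apply: eq_big => [[k x]|[k x] _].
      by rewrite !inE andbT.
    by rewrite Lf_gamma.
  exact: act_prod inj hA hT sp.
- have [inj hA hT sp] := caseB two_nz q_odd det.
  have -> : BP f = \prod_(i in AB K) Lf f (SB i).
    rewrite big_sumType /= /BP mulrC; congr (_ * _).
      rewrite /gammaP pair_big_dep; apply: eq_big => [[k x]|[k x] _].
        by rewrite !inE andbT.
      by rewrite Lf_gamma.
    rewrite /betaP; apply: eq_big => [x|x _]; first by rewrite inE.
    have h2 : 2 * f 2^-1 = 1 :> F by rewrite -(rmorph_nat f 2) -rmorphM mulfV // rmorph1.
    by rewrite /Lf /= h2 !rmorph0 rmorph1 !mul0r add0r mul1r.
  exact: act_prod inj hA hT sp.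
Qed.
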